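(* For every permutation $\pi$ in a Rauzy class, the modulus-two reduction of the Rauzy–Veech group preserves $Q_\pi$: $\overline{\mathrm{RV}}(\pi)\subseteq O(Q_\pi)$.
   Context: Permutations $\pi=(\pi_{\mathrm t},\pi_{\mathrm b})$ are pairs of bijections $\mathcal{A}\to\{1,\dots,d\}$, $d\ge3$, irreducible and nondegenerate. Rauzy induction: the top operation, with $\alpha_{\mathrm b,k}=\alpha_{\mathrm t,d}$, replaces the bottom row by $\alpha_{\mathrm b,1},\dots,\alpha_{\mathrm b,k},\alpha_{\mathrm b,d},\alpha_{\mathrm b,k+1},\dots,\alpha_{\mathrm b,d-1}$ (winner $\alpha_{\mathrm t,d}$, loser $\alpha_{\mathrm b,d}$); the bottom operation, with $\alpha_{\mathrm t,k}=\alpha_{\mathrm b,d}$, replaces the top row by $\alpha_{\mathrm t,1},\dots,\alpha_{\mathrm t,k},\alpha_{\mathrm t,d},\alpha_{\mathrm t,k+1},\dots,\alpha_{\mathrm t,d-1}$ (winner $\alpha_{\mathrm b,d}$, loser $\alpha_{\mathrm t,d}$); Rauzy classes are connected components of this directed graph. $B_\gamma=\mathrm{Id}+E_{\alpha_{\mathrm l}\alpha_{\mathrm w}}$ for an arrow, $B_{\gamma^{-1}}=B_\gamma^{-1}$, $B_{\gamma_1\cdots\gamma_n}=B_{\gamma_n}\cdots B_{\gamma_1}$; $\mathrm{RV}(\pi)$ is the group of $B_\gamma$ over closed walks at $\pi$ (arrows and reversed arrows), acting on row vectors. $(\Omega_\pi)_{\alpha\beta}=+1$ if $\pi_{\mathrm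 t}(\alpha)<\pi_{\mathrm t}(\beta)$ and $\pi_{\mathrm b}(\alpha)>\pi_{\mathrm b}(\beta)$, $-1$ if the reverse inequalities hold, $0$ otherwise. A bar denotes reduction mod 2. $Q_\pi(u)=\sum_{\pi_{\mathrm t}(\alpha)<\pi_{\mathrm t}(\beta)}u_\alpha(\Omega_\pi)_{\alpha\beta}u_\beta+\sum_\alpha u_\alpha\bmod2$ on $(\mathbb{Z}/2\mathbb{Z})^{\mathcal{A}}$, and $O(Q_\pi)$ is the group of invertible linear maps $S$ of $(\mathbb{Z}/2\mathbb{Z})^{\mathcal{A}}$ with $Q_\pi(uS)=Q_\pi(u)$ for all $u$. *)

(* Defs.v *)
From mathcomp Require Import all_boot all_order all_algebra.
Set Implicit Arguments. Unset Strict Implicit. Unset Printing Implicit Defensive.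
Import GRing.Theory Num.Theory.
Local Open Scope ring_scope.

Section Rauzy.
Variable A : finType.

(* A permutation pi = (pi_t, pi_b) is represented by its two rows:
   t = [alpha_{t,1}; ...; alpha_{t,d}] and b = [alpha_{b,1}; ...; alpha_{b,d}],
   so that pi_t(alpha) = index alpha t + 1 and pi_b(alpha) = index alpha b + 1.
   The rows are bijections A -> {1..d} iff they enumerate A without repetition. *)
Definition ppair := (seq A * seq A)%type.

Definition valid_pp (p : ppair) : bool :=
  perm_eq p.1 (enum A) && perm_eq p.2 (enum A).

Definition pp_irreducible (p : ppair) : bool :=
  ~~ [exists k : 'I_(size p.1), (0 < k)%N && perm_eq (take k p.1) (take k p.2)].

(* Veech's permutation sigma on {0,...,d} (p = pi_b o pi_t^{-1} on positions):
   sigma 0 = p^{-1}(1) - 1, sigma j = d if p(j) = d,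
   sigma j = p^{-1}(p(j)+1) - 1 otherwise.
   The singularities of the suspensions correspond to the cycles of sigma, a
   cycle containing exactly k+1 elements of {1..d-1} giving a cone point of
   angle 2 pi (k+1).  Nondegenerate = no marked point (angle 2 pi), i.e. no
   cycle containing exactly one element of {1,..,d-1}. *)
Definition veech_sigma (p : ppair) (x0 : A) (j : nat) : nat :=
  let d := size p.1 in
  let pos := fun i => (index (nth x0 p.1 i.-1) p.2).+1 in
  let posinv := fun i => (index (nth x0 p.2 i.-1) p.1).+1 in
  if j == 0%N then (posinv 1%N).-1
  else if pos j == d then d
  else (posinv (pos j).+1).-1.

Definition pp_nondegenerate (p : ppair) : bool :=
  match p.1 with
  | [::] => true
  | x0 :: _ =>
    let d := size p.1 in
    [forall j : 'I_d, (0 < j)%N ==>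
       [exists m : 'I_(d.+2),
          let k := iter m (veech_sigma p x0) j in
          [&& (0 < k)%N, (k < d)%N & k != j]]]
  end.

(* Rauzy operations.  Top (winner alpha_{t,d}, loser alpha_{b,d}) and
   bottom (winner alpha_{b,d}, loser alpha_{t,d}). *)
Definition rauzy_top (p : ppair) : ppair :=
  match rev p.1, rev p.2 with
  | x :: _, y :: rb' =>
      let b' := rev rb' in let k := (index x b').+1 in
      (p.1, take k b' ++ y :: drop k b')
  | _, _ => p
  end.

Definition rauzy_bot (p : ppair) : ppair :=
  match rev p.1, rev p.2 with
  | x :: rt', y :: _ =>
      let t' := rev rt' in let k := (index y t').+1 in
      (take k t' ++ x :: drop k t', p.2)
  | _, _ => p
  end.

Definition rauzy_op (top : bool) (p : ppair) : ppair :=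
  if top then rauzy_top p else rauzy_bot p.


Definition Emx (a c : A) : 'M[int]_#|A| := delta_mx (enum_rank a) (enum_rank c).

(* B_gamma = Id + E_{loser, winner} for the arrow from p of type top/bottom *)
Definition arrow_mx (top : bool) (p : ppair) : 'M[int]_#|A| :=
  match rev p.1, rev p.2 with
  | x :: _, y :: _ =>
      if top then 1%:M + Emx y x else 1%:M + Emx x y
  | _, _ => 1%:M
  end.

(* A step of a walk: an arrow (base vertex, top?) traversed forward (true)
   or backward (false). *)
Definition step := (ppair * bool * bool)%type.

Definition step_src (s : step) : ppair :=
  let: (p, top, fwd) := s in if fwd then p else rauzy_op top p.
Definition step_tgt (s : step) : ppair :=
  let: (p, top, fwd) := s in if fwd then rauzy_op top p else p.
Definition step_mx (s : step) : 'M[int]_#|A| :=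
  let: (p, top, fwd) := s in
  if fwd then arrow_mx top p else invmx (arrow_mx top p).

Fixpoint walk_ok (cur target : ppair) (w : seq step) : bool :=
  match w with
  | [::] => cur == target
  | s :: w' =>
      let: (p, _, _) := s in
      [&& valid_pp p, pp_irreducible p, step_src s == cur & walk_ok (step_tgt s) target w']
  end.

Definition walk_mx (w : seq step) : 'M[int]_#|A| :=
  foldl (fun M s => step_mx s *m M) 1%:M w.

Definition RVgroup (p : ppair) : 'M[int]_#|A| -> Prop :=
  fun M => exists w, walk_ok p p w /\ M = walk_mx w.

Definition red2 (M : 'M[int]_#|A|) : 'M['F_2]_#|A| := map_mx (fun z => z%:~R) M.

Definition Omega (p : ppair) (a c : A) : int :=
  let ta := index a p.1 in let tc := index c p.1 in
  let ba := index a p.2 in let bc := index c p.2 in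
  if (ta < tc)%N && (bc < ba)%N then 1
  else if (tc < ta)%N && (ba < bc)%N then -1 else 0.

Definition Qform (p : ppair) (u : 'rV['F_2]_#|A|) : 'F_2 :=
  \sum_(a : A) \sum_(c : A | (index a p.1 < index c p.1)%N)
      u 0 (enum_rank a) * (Omega p a c)%:~R * u 0 (enum_rank c)
  + \sum_(a : A) u 0 (enum_rank a).

Definition OQ (p : ppair) (S : 'M['F_2]_#|A|) : Prop :=
  S \in unitmx /\ forall u, Qform p (u *m S) = Qform p u.

End Rauzy.

(* Main.v *)
Require Import Defs.
From mathcomp Require Import all_boot all_order all_algebra.
From mathcomp Require Import ring zify.
Set Implicit Arguments. Unset Strict Implicit. Unset Printing Implicit Defensive.
Import GRing.Theory Num.Theory.
Local Open Scope ring_scope.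

Lemma F2_cases (s : 'F_2) : s = 0 \/ s = 1.
Proof. case: s => [[|[|n]]] H; [left|right|]; try exact: val_inj; done. Qed.
Lemma F2_11 : (1 + 1 : 'F_2) = 0.
Proof. by apply: val_inj. Qed.
Lemma F2_ss (s : 'F_2) : s * s + s = 0.
Proof. by case: (F2_cases s) => ->; rewrite ?mul1r ?mul0r ?addr0 ?F2_11. Qed.
Lemma F2_xx (s : 'F_2) : s + s = 0.
Proof. by case: (F2_cases s) => ->; rewrite ?addr0 ?F2_11. Qed.
Lemma F2_addb (b1 b2 : bool) : ((b1 (+) b2)%:R : 'F_2) = b1%:R + b2%:R.
Proof. by case: b1; case: b2; rewrite /= ?addr0 ?add0r ?F2_11. Qed.

Definition qR {A : finType} (R : A -> A -> bool) (u : A -> 'F_2) : 'F_2 :=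
  \sum_a \sum_c (R a c)%:R * u a * u c.

Lemma qR_ext {A : finType} (R : A -> A -> bool) u u' :
  u =1 u' -> qR R u = qR R u'.
Proof. by move=> e; apply: eq_bigr => a _; apply: eq_bigr => c _; rewrite !e. Qed.

Lemma qR_xor {A : finType} (R D : A -> A -> bool) u :
  qR (fun a c => R a c (+) D a c) u = qR R u + qR D u.
Proof.
rewrite /qR -big_split; apply: eq_bigr => a _; rewrite -big_split.
by apply: eq_bigr => c _; rewrite F2_addb !mulrDl.
Qed.

Lemma sum_sym0 {A : finType} (f : A -> A -> 'F_2) :
  (forall a c, f a c = f c a) -> (forall a, f a a = 0) ->
  \sum_a \sum_c f a c = 0.
Proof.
move=> fs f0.
have -> : \sum_a \sum_c f a c =
  \sum_a \sum_c ((if (enum_rank a < enum_rank c)%N then f a c else 0)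
               + (if (enum_rank c < enum_rank a)%N then f a c else 0)).
  apply: eq_bigr => a _; apply: eq_bigr => c _.
  case: ltngtP => [h|h|h]; rewrite ?addr0 ?add0r //.
  by have /ord_inj/enum_rank_inj -> := h; rewrite f0.
rewrite (eq_bigr (fun a => \sum_c (if (enum_rank a < enum_rank c)%N then f a c else 0)
   + \sum_c (if (enum_rank c < enum_rank a)%N then f a c else 0))); last first.
  by move=> a _; rewrite big_split.
rewrite big_split /= [X in _ + X]exchange_big /=.
rewrite [X in _ + X](eq_bigr (fun a => \sum_c (if (enum_rank a < enum_rank c)%N then f a c else 0))).
  exact: F2_xx.
by move=> a _; apply: eq_bigr => c _; rewrite fs.
Qed.

Lemma qR_sym {A : finType} (R1 R2 : A -> A -> bool) u :
  (forall a c, a != c -> R1 a c (+) R1 c a = R2 a c (+) R2 c a) ->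
  (forall a, R1 a a = R2 a a) -> qR R1 u = qR R2 u.
Proof.
move=> hs hd.
have e : forall a c, R2 a c = R1 a c (+) (R1 a c (+) R2 a c).
  by move=> a c; rewrite addbA addbb addFb.
rewrite (_ : qR R2 u = qR (fun a c => R1 a c (+) (R1 a c (+) R2 a c)) u); last first.
  by apply: eq_bigr => a _; apply: eq_bigr => c _; rewrite -e.
rewrite qR_xor (_ : qR (fun a c => R1 a c (+) R2 a c) u = 0) ?addr0 //.
rewrite /qR; apply: (@sum_sym0 A (fun a c => ((R1 a c (+) R2 a c)%:R * u a * u c))) => [a c|a]; last by rewrite hd addbb mul0r mul0r.
case: (eqVneq a c) => [->//|ne].
have h := hs a c ne.
have -> : R1 c a (+) R2 c a = R1 a c (+) R2 a c.
  by move: h; case: (R1 a c); case: (R2 a c); case: (R1 c a); case: (R2 c a).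
by rewrite mulrAC.
Qed.

Definition Rp {A : finType} (p : ppair A) (a c : A) : bool :=
  (index a p.1 < index c p.1)%N && (index c p.2 < index a p.2)%N.
Definition uv {A : finType} (U : 'rV['F_2]_#|A|) : A -> 'F_2 :=
  fun a => U 0 (enum_rank a).

Lemma QformE {A : finType} (p : ppair A) U :
  Qform p U = qR (Rp p) (uv U) + \sum_a uv U a.
Proof.
rewrite /Qform /qR; congr (_ + _); apply: eq_bigr => a _.
rewrite big_mkcond; apply: eq_bigr => c _ /=; rewrite /Rp /Omega /uv.
case: ltnP => h /=; last by rewrite mul0r mul0r.
rewrite (ltnNge (index c p.1)) (ltnW h) /=.
by case: (index c p.2 < index a p.2)%N => /=; rewrite ?mulr1 ?mul1r ?mulr0 ?mul0r.
Qed.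

Definition swp {A : finType} (p : ppair A) : ppair A := (p.2, p.1).

Lemma qR_tr {A : finType} (R : A -> A -> bool) u :
  qR (fun a c => R c a) u = qR R u.
Proof.
rewrite /qR exchange_big /=; apply: eq_bigr => a _; apply: eq_bigr => c _.
by rewrite mulrAC.
Qed.

Lemma Qform_swap {A : finType} (p : ppair A) U : Qform (swp p) U = Qform p U.
Proof.
rewrite !QformE -[qR (Rp p) _]qR_tr; congr (_ + _).
by apply: eq_bigr => a _; apply: eq_bigr => c _; rewrite /Rp /= andbC.
Qed.

Lemma bot_swap {A : finType} (p : ppair A) :
  rauzy_bot p = swp (rauzy_top (swp p)).
Proof.
case: p => t b; rewrite /rauzy_bot /rauzy_top /swp /=.
by case: (rev t) => [|x rt]; case: (rev b) => [|y rb].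
Qed.

Lemma arrow_swap {A : finType} (p : ppair A) :
  arrow_mx false p = arrow_mx true (swp p).
Proof.
case: p => t b; rewrite /arrow_mx /swp /=.
by case: (rev t) => [|x rt]; case: (rev b) => [|y rb].
Qed.

Definition F2E {A : finType} (l w : A) : 'M['F_2]_#|A| :=
  1%:M + delta_mx (enum_rank l) (enum_rank w).

Lemma red2_plus {A : finType} (l w : A) : red2 (1%:M + Emx l w) = F2E l w.
Proof.
apply/matrixP => i j; rewrite /red2 /F2E /Emx !mxE.
by case: (i == j); case: (_ && _); rewrite /= ?addr0 ?add0r.
Qed.

Lemma red2_minus {A : finType} (l w : A) : red2 (1%:M - Emx l w) = F2E l w.
Proof.
apply/matrixP => i j; rewrite /red2 /F2E /Emx !mxE.
case: (i == j); case: (_ && _); rewrite /= ?subr0 ?sub0r ?addr0 ?add0r //.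
  by rewrite subrr F2_11.
by rewrite rmorphN /= rmorph1; apply: val_inj.
Qed.

Lemma E_sq {A : finType} (R : pzRingType) (l w : A) : l != w ->
  (delta_mx (enum_rank l) (enum_rank w) : 'M[R]_#|A|) *m delta_mx (enum_rank l) (enum_rank w) = 0.
Proof.
move=> ne; apply: mul_delta_mx_0.
by apply: contra ne => /eqP /enum_rank_inj ->.
Qed.

Lemma arrow_inv {A : finType} (l w : A) : l != w ->
  (1%:M + Emx l w) *m (1%:M - Emx l w) = 1%:M /\
  invmx (1%:M + Emx l w) = 1%:M - Emx l w.
Proof.
move=> ne.
have h : (1%:M + Emx l w) *m (1%:M - Emx l w) = 1%:M.
  rewrite mulmxDl !mulmxBr !mul1mx !mulmx1 /Emx E_sq // subr0.
  by rewrite subrK.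
split=> //.
have [u1 _] := mulmx1_unit h.
by rewrite -[LHS]mulmx1 -[X in _ *m X = _]h mulmxA mulVmx // mul1mx.
Qed.

Lemma F2E_sq {A : finType} (l w : A) : l != w -> F2E l w *m F2E l w = 1%:M.
Proof.
move=> ne; have [h _] := arrow_inv ne.
by rewrite -{1}red2_plus -red2_minus /red2 -map_mxM h map_mx1.
Qed.

Lemma uv_F2E {A : finType} (l w : A) U :
  uv (U *m F2E l w) =1 (fun a => uv U a + (a == w)%:R * uv U l).
Proof.
move=> a; rewrite /uv /F2E mulmxDr mulmx1 mxE; congr (_ + _).
rewrite mxE (bigD1 (enum_rank l)) //= big1 ?addr0.
  rewrite mxE eqxx /= (inj_eq enum_rank_inj).
  by case: (a == w); rewrite /= ?mulr1 ?mulr0 ?mul1r ?mul0r.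
by move=> k /negbTE nk; rewrite mxE nk /= mulr0.
Qed.

Lemma sum_dl {A : finType} {K : pzSemiRingType} (g : A -> K) (x : A) :
  \sum_a (a == x)%:R * g a = g x.
Proof.
rewrite (bigD1 x) //= eqxx mul1r big1 ?addr0 // => a /negbTE ->.
by rewrite mul0r.
Qed.

Lemma sum4 {A : finType} (f1 f2 f3 f4 : A -> A -> 'F_2) :
  \sum_a \sum_c (f1 a c + f2 a c + f3 a c + f4 a c) =
  \sum_a \sum_c f1 a c + \sum_a \sum_c f2 a c + \sum_a \sum_c f3 a c
  + \sum_a \sum_c f4 a c.
Proof. by rewrite -!big_split; apply: eq_bigr => a _; rewrite -!big_split. Qed.

Lemma T1 {A : finType} (X : A -> A -> 'F_2) x :
  \sum_a \sum_c (a == x)%:R * X a c = \sum_c X x c.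
Proof.
rewrite (eq_bigr (fun a => (a == x)%:R * \sum_c X a c)) ?sum_dl //.
by move=> a _; rewrite mulr_sumr.
Qed.

Lemma T2 {A : finType} (X : A -> A -> 'F_2) x :
  \sum_a \sum_c (c == x)%:R * X a c = \sum_a X a x.
Proof. by apply: eq_bigr => a _; rewrite sum_dl. Qed.

Lemma T3 {A : finType} (X : A -> A -> 'F_2) x :
  \sum_a \sum_c (a == x)%:R * ((c == x)%:R * X a c) = X x x.
Proof. by rewrite T1 sum_dl. Qed.

Lemma qR_expand {A : finType} (R : A -> A -> bool) (u : A -> 'F_2) x s :
  qR R (fun a => u a + (a == x)%:R * s) =
  qR R u + s * \sum_c ((R x c)%:R + (R c x)%:R) * u c + s * s * (R x x)%:R.
Proof.
rewrite /qR.
transitivity (\sum_a \sum_c ((fun a c => (R a c)%:R * u a * u c) a c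
   + (fun a c => (a == x)%:R * (s * (R a c)%:R * u c)) a c
   + (fun a c => (c == x)%:R * (s * (R a c)%:R * u a)) a c
   + (fun a c => (a == x)%:R * ((c == x)%:R * (s * s * (R a c)%:R))) a c)).
  by apply: eq_bigr => a _; apply: eq_bigr => c _ /=; ring.
rewrite sum4 T1 T2 T3.
have -> : s * \sum_c ((R x c)%:R + (R c x)%:R) * u c =
   \sum_c s * (R x c)%:R * u c + \sum_a s * (R a x)%:R * u a.
  by rewrite -big_split mulr_sumr; apply: eq_bigr => c _ /=; ring.
by rewrite !addrA.
Qed.

Lemma qR_D {A : finType} (y : A) (Pc : A -> bool) u :
  qR (fun a c => (a == y) && Pc c) u = u y * \sum_c (Pc c)%:R * u c.
Proof.
rewrite /qR (bigD1 y) // [X in _ + X = _]big1 => [|a /andP[_ /negbTE ay]].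
  rewrite addr0 mulr_sumr; apply: eq_bigr => c _; rewrite eqxx /=; ring.
by apply: big1 => c _; rewrite ay /= !mul0r.
Qed.

Lemma cross {A : finType} (t b : seq A) a c :
  a \in t -> c \in t -> a \in b -> c \in b -> a != c ->
  Rp (t, b) a c (+) Rp (t, b) c a =
  (index a t < index c t)%N (+) (index a b < index c b)%N.
Proof.
move=> hat hct hab hcb ne.
have n1 : index a t != index c t.
  by apply: contra ne => /eqP e; rewrite -(nth_index a hat) e nth_index.
have n2 : index a b != index c b.
  by apply: contra ne => /eqP e; rewrite -(nth_index a hab) e nth_index.
rewrite /Rp /=; move: n1 n2.
by case: ltngtP => _ //; case: ltngtP => _ //.
Qed.

Lemma rauzy_top_rcons {A : finType} (t0 b0 : seq A) x y :
  rauzy_top (rcons t0 x, rcons b0 y) =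
  (rcons t0 x, take (index x b0).+1 b0 ++ y :: drop (index x b0).+1 b0).
Proof. by rewrite /rauzy_top /= !rev_rcons revK. Qed.

Lemma fin_alg (a b c s z : 'F_2) :
  z = 0 -> a + s * (b + s) + s * s * z + (c + s) = a + s * b + c.
Proof.
move=> ->; have h := F2_ss s.
transitivity (a + s * b + c + (s * s + s)); first ring.
by rewrite h addr0.
Qed.

Lemma idx_lemma {A : finType} (P S : seq A) y a c :
  [\/ [/\ a \in P, a \notin S & a != y],
      [/\ a \notin P, a \in S & a != y] |
      [/\ a = y, a \notin P & a \notin S]] ->
  [\/ [/\ c \in P, c \notin S & c != y],
      [/\ c \notin P, c \in S & c != y] |
      [/\ c = y, c \notin P & c \notin S]] ->
  (a \in P -> (index a P < size P)%N) -> (a \in S -> (index a S < size S)%N) ->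
  (c \in P -> (index c P < size P)%N) -> (c \in S -> (index c S < size S)%N) ->
  a != c ->
  ((if a \in P then index a P else if a == y then size P
      else (size P + (index a S).+1)%N) <
   (if c \in P then index c P else if c == y then size P
      else (size P + (index c S).+1)%N))%N =
  ((if a \in P then index a P else if a \in S then (size P + index a S)%N
      else (size P + size S)%N) <
   (if c \in P then index c P else if c \in S then (size P + index c S)%N
      else (size P + size S)%N))%N
  (+) (((a == y) && (c \in S)) (+) ((c == y) && (a \in S))).
Proof.
move=> ca cc iPa iSa iPc iSc ac.
case: ca => [[aP /negbTE aS /negbTE ay]|[/negbTE aP aS /negbTE ay]|[-> /negbTE aP /negbTE aS]];
case: cc => [[cP /negbTE cS /negbTE cy]|[/negbTE cP cS /negbTE cy]|[-> /negbTE cP /negbTE cS]];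
try (move: ac; rewrite eqxx; done);
rewrite ?aP ?aS ?ay ?cP ?cS ?cy ?eqxx /= ?addbF ?addbT;
try (have := iPa aP); try (have := iSa aS);
try (have := iPc cP); try (have := iSc cS);
lia.
Qed.

Lemma top_core {A : finType} (t0 b0 : seq A) x y (u : A -> 'F_2) :
  perm_eq (rcons t0 x) (enum A) -> perm_eq (rcons b0 y) (enum A) -> x != y ->
  qR (Rp (rcons t0 x, rcons b0 y)) (fun a => u a + (a == x)%:R * u y)
    + \sum_a (u a + (a == x)%:R * u y)
  = qR (Rp (rauzy_top (rcons t0 x, rcons b0 y))) u + \sum_a u a.
Proof.
move=> ht hb ne.
rewrite rauzy_top_rcons qR_expand.
set k := (index x b0).+1.
set P := take k b0; set S := drop k b0.
have memt : forall a, a \in rcons t0 x by move=> a; rewrite (perm_mem ht) mem_enum.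
have memb : forall a, a \in rcons b0 y by move=> a; rewrite (perm_mem hb) mem_enum.
have ut : uniq (rcons t0 x) by rewrite (perm_uniq ht) enum_uniq.
have ub : uniq (rcons b0 y) by rewrite (perm_uniq hb) enum_uniq.
have xt0 : x \notin t0 by move: ut; rewrite rcons_uniq => /andP[].
have yb0 : y \notin b0 by move: ub; rewrite rcons_uniq => /andP[].
have ub0 : uniq b0 by move: ub; rewrite rcons_uniq => /andP[].
have xb0 : x \in b0.
  by have := memb x; rewrite mem_rcons in_cons (negbTE ne).
have eb0 : b0 = P ++ S by rewrite cat_take_drop.
have uPS : uniq (P ++ S) by rewrite -eb0.
have yP : y \notin P by apply: contra yb0; rewrite eb0 mem_cat => ->.
have yS : y \notin S by apply: contra yb0; rewrite eb0 mem_cat => ->; rewrite orbT.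
have disj : forall a, a \in P -> a \notin S.
  move=> a aP; move: uPS; rewrite cat_uniq => /and3P[_ /hasPn h _].
  by apply/negP => aS; have := h a aS; rewrite aP.
have xP : x \in P by rewrite /P in_take // /k ltnSn.
have ixb0 : (index x b0 < size b0)%N by rewrite index_mem.
have sP : size P = k by rewrite /P size_takel.
have ixP : index x P = index x b0.
  by rewrite [in RHS]eb0 index_cat xP.
have ibE : forall a, index a (rcons b0 y) =
   if a \in P then index a P else if a \in S then (size P + index a S)%N
   else (size P + size S)%N.
  move=> a; rewrite -cats1 eb0 -catA index_cat index_cat.
  case: ifP => // aP; case: ifP => // aS.
  have := memb a; rewrite mem_rcons in_cons eb0 mem_cat aP aS !orbF => /eqP ->.
  by rewrite /= eqxx addn0.
have ib'E : forall a, index a (P ++ y :: S) =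
   if a \in P then index a P else if a == y then size P
   else (size P + (index a S).+1)%N.
  move=> a; rewrite index_cat /=; case: ifP => // _.
  by rewrite eq_sym; case: (a == y); rewrite ?addn0.
have cls : forall a, [\/ [/\ a \in P, a \notin S & a != y],
                      [/\ a \notin P, a \in S & a != y] |
                      [/\ a = y, a \notin P & a \notin S]].
  move=> a; case: (eqVneq a y) => [->|ay]; first by apply: Or33.
  case aP: (a \in P); first by apply: Or31; rewrite disj.
  have := memb a; rewrite mem_rcons in_cons (negbTE ay) eb0 mem_cat aP /= => aS.
  by apply: Or32.
have itx : index x (rcons t0 x) = size t0.
  by rewrite -cats1 index_cat (negbTE xt0) /= eqxx addn0.
have itc : forall c, c != x -> (index c (rcons t0 x) < size t0)%N.
  move=> c cx; have := memt c; rewrite mem_rcons in_cons (negbTE cx) /= => ct0.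
  by rewrite -cats1 index_cat ct0 index_mem.
have iP : forall a, a \in P -> (index a P < size P)%N by move=> a; rewrite index_mem.
have iS : forall a, a \in S -> (index a S < size S)%N by move=> a; rewrite index_mem.
have Rxc : forall c, Rp (rcons t0 x, rcons b0 y) x c = false.
  move=> c; rewrite /Rp /= itx; case: (eqVneq c x) => [->|cx]; first by rewrite itx ltnn.
  by rewrite ltnNge (ltnW (itc c cx)).
have Rcx : forall c, Rp (rcons t0 x, rcons b0 y) c x = (c \notin P).
  move=> c; rewrite /Rp /= itx; case: (eqVneq c x) => [->|cx]; first by rewrite itx ltnn xP.
  rewrite itc //= !ibE xP ixP.
  case: (cls c) => [[cP _ _]|[/negbTE cP cS _]|[-> /negbTE cP /negbTE cS]].
  - rewrite cP; apply/negbTE; rewrite -leqNgt -ltnS -/k -sP; exact: iP.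
  - by rewrite cP cS sP /k ltn_addr.
  - by rewrite cP cS sP /k ltn_addr.
have sumS : \sum_c ((Rp (rcons t0 x, rcons b0 y) x c)%:R
                   + (Rp (rcons t0 x, rcons b0 y) c x)%:R) * u c
            = \sum_c (c \in S)%:R * u c + u y.
  rewrite -[u y in RHS](sum_dl u y) -big_split; apply: eq_bigr => c _.
  rewrite /= Rxc Rcx add0r -mulrDl -F2_addb.
  have -> : (c \notin P) = (c \in S) (+) (c == y); last by [].
  case: (cls c) => [[cP /negbTE cS /negbTE cy]|[/negbTE cP cS /negbTE cy]|[-> /negbTE cP /negbTE cS]].
  - by rewrite cP cS cy.
  - by rewrite cP cS cy.
  - by rewrite cP cS eqxx.
have memb' : forall a, a \in P ++ y :: S.
  move=> a; have := memb a; rewrite mem_rcons in_cons eb0 !mem_cat in_cons.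
  by case: (a == y); case: (a \in P); case: (a \in S).
have qRp' : qR (Rp (rcons t0 x, P ++ y :: S)) u =
    qR (Rp (rcons t0 x, rcons b0 y)) u + qR (fun a c => (a == y) && (c \in S)) u.
  rewrite -qR_xor; apply: qR_sym => [a c ac|a]; last first.
    rewrite /Rp /= !ltnn /=; case: (eqVneq a y) => [->|] //=.
    by rewrite (negbTE yS).
  rewrite addbACA (cross (memt a) (memt c) (memb' a) (memb' c) ac).
  rewrite (cross (memt a) (memt c) (memb a) (memb c) ac) -!addbA; congr (_ (+) _).
  rewrite !ib'E !ibE.
  exact: idx_lemma (cls a) (cls c) (iP a) (iS a) (iP c) (iS c) ac.
rewrite sumS qRp' qR_D big_split sum_dl.
by apply: fin_alg; rewrite Rxc.
Qed.

Lemma last_neq {A : finType} (p : ppair A) :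
  (3 <= #|A|)%N -> valid_pp p -> pp_irreducible p ->
  exists t0 x b0 y, p = (rcons t0 x, rcons b0 y) /\ x != y.
Proof.
case: p => t b h3 /andP [ht hb] irr; rewrite /= in ht hb irr.
have st : size t = #|A| by rewrite (perm_size ht) -cardE.
have sb : size b = #|A| by rewrite (perm_size hb) -cardE.
case/lastP: t ht irr st => [|t0 x] ht irr st.
  by move: h3; rewrite -st.
case/lastP: b hb irr sb => [|b0 y] hb irr sb.
  by move: h3; rewrite -sb.
exists t0, x, b0, y; split=> //.
apply/negP => /eqP exy; subst y.
move: irr; rewrite /pp_irreducible /= => /negP; apply.
have hlt : (size t0 < size (rcons t0 x))%N by rewrite size_rcons.
apply/existsP; exists (Ordinal hlt) => /=.
have s0 : size b0 = size t0.
  by rewrite !size_rcons in sb st; apply: succn_inj; rewrite sb st.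
have hp : perm_eq (rcons t0 x) (rcons b0 x).
  by apply: (perm_trans ht); rewrite perm_sym.
apply/andP; split.
  by move: h3; rewrite -st size_rcons ltnS; apply: leq_trans.
rewrite -!cats1 take_size_cat // -s0 take_size_cat //.
by move: hp; rewrite -!cats1 perm_cat2r.
Qed.

Lemma arrow_eq {A : finType} (t0 b0 : seq A) x y top :
  arrow_mx top (rcons t0 x, rcons b0 y) =
  if top then 1%:M + Emx y x else 1%:M + Emx x y.
Proof. by rewrite /arrow_mx /= !rev_rcons. Qed.

Lemma top_step {A : finType} (t0 b0 : seq A) x y U :
  perm_eq (rcons t0 x) (enum A) -> perm_eq (rcons b0 y) (enum A) -> x != y ->
  Qform (rcons t0 x, rcons b0 y) (U *m F2E y x) =
  Qform (rauzy_top (rcons t0 x, rcons b0 y)) U.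
Proof.
move=> ht hb ne; rewrite !QformE (qR_ext _ (uv_F2E y x U)).
rewrite (eq_bigr (fun a => uv U a + (a == x)%:R * uv U y)) => [|a _]; last exact: uv_F2E.
exact: top_core.
Qed.

Lemma bot_step {A : finType} (t0 b0 : seq A) x y U :
  perm_eq (rcons t0 x) (enum A) -> perm_eq (rcons b0 y) (enum A) -> x != y ->
  Qform (rcons t0 x, rcons b0 y) (U *m F2E x y) =
  Qform (rauzy_bot (rcons t0 x, rcons b0 y)) U.
Proof.
move=> ht hb ne.
rewrite bot_swap Qform_swap -(Qform_swap (rcons t0 x, rcons b0 y)) /swp /=.
by apply: top_step => //; rewrite eq_sym.
Qed.

Lemma arrow_step {A : finType} (t0 b0 : seq A) x y top :
  perm_eq (rcons t0 x) (enum A) -> perm_eq (rcons b0 y) (enum A) -> x != y ->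
  exists l w, [/\ l != w, arrow_mx top (rcons t0 x, rcons b0 y) = 1%:M + Emx l w &
    forall U, Qform (rcons t0 x, rcons b0 y) (U *m F2E l w) =
              Qform (rauzy_op top (rcons t0 x, rcons b0 y)) U].
Proof.
move=> ht hb ne; rewrite arrow_eq; case: top.
  exists y, x; split => //; first by rewrite eq_sym.
  by move=> U; apply: top_step.
exists x, y; split => //.
by move=> U; apply: bot_step.
Qed.

Lemma step_ok {A : finType} (s : step A) :
  (3 <= #|A|)%N -> valid_pp s.1.1 -> pp_irreducible s.1.1 ->
  red2 (step_mx s) \in unitmx /\
  forall V, Qform (step_src s) (V *m red2 (step_mx s)) = Qform (step_tgt s) V.
Proof.
case: s => [[p top] fwd] /= h3 vp ip.
have [t0 [x [b0 [y [ep ne]]]]] := last_neq h3 vp ip.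
move: vp; rewrite ep => /andP [ht hb] /=.
have [l [w [lw ea hQ]]] := arrow_step top ht hb ne.
have er : red2 (step_mx (rcons t0 x, rcons b0 y, top, fwd)) = F2E l w.
  rewrite /step_mx ea; case: fwd; first exact: red2_plus.
  by have [_ ->] := arrow_inv lw; exact: red2_minus.
rewrite er; split.
  by have [] := mulmx1_unit (F2E_sq lw).
clear er; case: fwd => V /=; first exact: hQ.
by rewrite -hQ -mulmxA F2E_sq // mulmx1.
Qed.

Lemma foldl_mx {A : finType} (w : seq (step A)) (M : 'M[int]_#|A|) :
  foldl (fun M s => step_mx s *m M) M w =
  foldl (fun M s => step_mx s *m M) 1%:M w *m M.
Proof.
elim: w M => [|s w IH] M /=; first by rewrite mul1mx.
by rewrite IH (IH (step_mx s *m 1%:M)) mulmx1 mulmxA.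
Qed.

Lemma walk_main {A : finType} (w : seq (step A)) :
  (3 <= #|A|)%N -> forall cur target, walk_ok cur target w ->
  red2 (walk_mx w) \in unitmx /\
  forall U, Qform cur (U *m red2 (walk_mx w)) = Qform target U.
Proof.
move=> h3; elim: w => [|s w IH] cur target.
  move=> /= /eqP ->; rewrite /walk_mx /= /red2 map_mx1.
  by split; [exact: unitmx1 | move=> U; rewrite mulmx1].
case: s => [[p top] fwd] /= /and4P [vp ip /eqP hsrc hw].
have [u1 q1] := @step_ok A (p, top, fwd) h3 vp ip.
have [u2 q2] := IH _ _ hw.
have -> : walk_mx ((p, top, fwd) :: w) = walk_mx w *m step_mx (p, top, fwd).
  by rewrite /walk_mx /= foldl_mx mulmx1.
rewrite /red2 map_mxM -/red2; split.
  by rewrite unitmx_mul u1 u2.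
move=> U; rewrite mulmxA -hsrc; exact: (etrans (q1 _) (q2 _)).
Qed.

Theorem corollary2p12 (A : finType) (p : ppair A) :
  (3 <= #|A|)%N -> valid_pp p -> pp_irreducible p -> pp_nondegenerate p ->
  forall M : 'M[int]_#|A|, RVgroup p M -> OQ p (red2 M).
Proof.
move=> h3 vp ip nd M [w [hw ->]].
have [hu hq] := walk_main h3 hw.
by split.
Qed.
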